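(* Consider $N$ agents, all of whose neighborhoods are $\mathcal{N}(i)=\{1,\dots,N\}$ (fully connected debate graph), on a probability space with sub-$\sigma$-algebras $\mathcal{F}_{t-1}$. At round $t-1$ each agent $j$ emits random variables $y_{j,t-1}\in\{1,\dots,K\}$ and $w_{j,t-1}\in(0,1]$. Let $p_{j,t-1}=\Pr(y_{j,t-1}=1\mid\mathcal{F}_{t-1})$, $\rho_{j,t-1}=\mathbb{E}[w_{j,t-1}\mathbf{1}\{y_{j,t-1}=1\}\mid\mathcal{F}_{t-1}]/\mathbb{E}[w_{j,t-1}\mid\mathcal{F}_{t-1}]$, and $$q_{i,t-1}=\frac{\mathbb{E}\big[\sum_{j}w_{j,t-1}\mathbf{1}\{y_{j,t-1}=1\}\mid\mathcal{F}_{t-1}\big]}{\mathbb{E}\big[\sum_j w_{j,t-1}\mid\mathcal{F}_{t-1}\big]}.$$ Assume confidence is positively correlated with correctness: $\rho_{j,t-1}\ge p_{j,t-1}$ almost surely for all $j,t$, with strict inequality on a set of positive probability for at least one agent and round. Assume homogeneity: $p_{j,t-1}=p_{i,t-1}$ for all $j$. Then $q_{i,t-1}\ge p_{i,t-1}$, with strict inequality on a set of positive probability.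
   Context: Option $1$ is the unique correct answer; $\mathcal{F}_{t-1}$ is the debate history up to round $t-1$; $w_{j,t-1}$ is agent $j$'s expressed confidence and $p_{j,t-1}$ its probability of answering correctly. *)

(* Defs.v *)
From HB Require Import structures.
From mathcomp Require Import all_boot all_order all_algebra.
From mathcomp Require Import all_classical all_reals all_analysis.
Set Implicit Arguments. Unset Strict Implicit. Unset Printing Implicit Defensive.
Import Order.TTheory GRing.Theory Num.Theory.
Local Open Scope classical_set_scope.
Local Open Scope ring_scope.

Section defs.
Context (d : measure_display) (T : measurableType d) (R : realType).

Definition is_sub_sigma_algebra (G : set (set T)) : Prop :=
  sigma_algebra setT G /\ (forall A, G A -> measurable A).

Definition G_measurable (G : set (set T)) (Y : T -> R) : Prop :=
  forall B : set R, measurable B -> G (Y @^-1` B).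

(* Y is a version of the conditional expectation E[X | G] under P:
   Y is G-measurable, integrable, and has the same integral as X over every
   G-set (X is assumed integrable separately). *)
Definition cond_exp (P : probability T R) (G : set (set T)) (X Y : T -> R) : Prop :=
  [/\ G_measurable G Y,
      P.-integrable setT (EFin \o Y) &
      forall A, G A -> (\int[P]_(x in A) (Y x)%:E = \int[P]_(x in A) (X x)%:E)%E].

(* Indicator of the event {y = 1} (option 1 is the correct answer). *)
Definition ind1 (y : T -> nat) : T -> R := fun x => ((y x == 1%N) : nat)%:R.

End defs.
Arguments ind1 {d T R} y x.

(* Main.v *)
Require Import Defs.
From HB Require Import structures.
From mathcomp Require Import all_boot all_order all_algebra.
From mathcomp Require Import all_classical all_reals all_analysis.
From mathcomp Require Import measurable_realfun lra.
Import Order.TTheory GRing.Theory Num.Theory.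
Local Open Scope classical_set_scope.
Local Open Scope ring_scope.

Lemma minv (R : realType) : measurable_fun [set: R] (GRing.inv : R -> R).
Proof.
have -> : [set: R] = [set 0] `|` ~` [set 0] by rewrite setUv.
apply/measurable_funU => //; first exact: measurableC. split.
  have h : measurable_fun [set (0:R)] (fun _ : R => (0:R)) by exact: measurable_cst.
  apply: eq_measurable_fun h.
  by move=> x; rewrite inE /= => ->; rewrite invr0.
apply: open_continuous_measurable_fun.
  apply: closed_openC. exact: closed_eq.
move=> x; rewrite inE /= => /eqP x0.
exact: inv_continuous.
Qed.

Section H.
Context (d : measure_display) (T : measurableType d) (R : realType)
  (P : probability T R).

Lemma G_meas_T (G : set (set T)) : is_sub_sigma_algebra G ->
  forall Y : T -> R, G_measurable G Y -> measurable_fun setT Y.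
Proof. by move=> [_ sub] Y hY _ B mB; rewrite setTI; exact: sub (hY B mB). Qed.

Lemma G_meas_g (G : set (set T)) : is_sub_sigma_algebra G ->
  forall Y : T -> R, G_measurable G Y ->
  measurable_fun (T := g_sigma_algebraType G) setT Y.
Proof.
move=> [sG _] Y hY _ B mB; rewrite setTI.
have E : <<s G >> = G := smallest_id sG.
by rewrite /measurable /= E; exact: hY.
Qed.

Lemma g_to_G (G : set (set T)) : is_sub_sigma_algebra G ->
  forall Y : T -> R, measurable_fun (T := g_sigma_algebraType G) setT Y ->
  forall B, measurable B -> G (Y @^-1` B).
Proof.
move=> [sG _] Y mY B mB.
have E : <<s G >> = G := smallest_id sG.
have := mY measurableT B mB; rewrite setTI.
by rewrite /measurable /= E.
Qed.

Lemma K0 (A : set T) (f : T -> R) : measurable A -> measurable_fun A f ->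
  (forall x, A x -> 0 < f x) -> (\int[P]_(x in A) (f x)%:E <= 0)%E -> P A = 0%E.
Proof.
move=> mA mf fp hi.
have h : (\int[P]_(x in A) `|(f x)%:E| = 0)%E.
  rewrite (eq_integral (fun x => (f x)%:E)); last first.
    by move=> x; rewrite inE => Ax; rewrite gee0_abs // lee_fin ltW // fp.
  apply/eqP; rewrite eq_le hi /=; apply: integral_ge0 => x Ax.
  by rewrite lee_fin ltW // fp.
have mfe : measurable_fun A (EFin \o f) by exact/measurable_EFinP.
move/(ae_eq_integral_abs P mA mfe): h => [N [mN PN0 sub]].
apply/eqP; rewrite eq_le measure_ge0 andbT -PN0.
apply: le_measure; rewrite ?inE //.
move=> x Ax; apply: sub => /= /(_ Ax) [] /eqP.
by rewrite gt_eqF // fp.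
Qed.


Lemma half0 (G : set (set T)) (HG : is_sub_sigma_algebra G) (Y1 Y2 : T -> R) :
  measurable_fun (T := g_sigma_algebraType G) setT Y1 ->
  measurable_fun (T := g_sigma_algebraType G) setT Y2 ->
  P.-integrable setT (EFin \o Y1) -> P.-integrable setT (EFin \o Y2) ->
  (forall A, G A -> \int[P]_(x in A) (Y1 x)%:E = \int[P]_(x in A) (Y2 x)%:E)%E ->
  measurable [set x | Y2 x < Y1 x] /\ P [set x | Y2 x < Y1 x] = 0%E.
Proof.
move=> m1 m2 i1 i2 h.
set A := [set x | Y2 x < Y1 x].
have GA : G A.
  have -> : A = (Y1 \- Y2) @^-1` `]0, +oo[.
    by apply/seteqP; split => x /=; rewrite in_itv /= andbT subr_gt0.
  by apply: g_to_G => //; exact: measurable_funB.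
have mA : measurable A by case: HG => _; apply.
split => //.
have mT1 := G_meas_T _ HG _ (g_to_G _ HG _ m1).
have mT2 := G_meas_T _ HG _ (g_to_G _ HG _ m2).
apply: (K0 _ (Y1 \- Y2)) => //.
- exact: (measurable_funS measurableT (@subsetT _ A) (measurable_funB mT1 mT2)).
- by move=> x; rewrite /A /= subr_gt0.
- rewrite (eq_integral (fun x => (Y1 x)%:E - (Y2 x)%:E)%E); last by move=> x _; rewrite EFinB.
  have j1 : P.-integrable A (EFin \o Y1) by exact: integrableS i1.
  have j2 : P.-integrable A (EFin \o Y2) by exact: integrableS i2.
  rewrite integralB_EFin // h // subee //.
  exact: integrable_fin_num j2.
Qed.

Lemma uniqY (G : set (set T)) (HG : is_sub_sigma_algebra G) (Y1 Y2 : T -> R) :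
  measurable_fun (T := g_sigma_algebraType G) setT Y1 ->
  measurable_fun (T := g_sigma_algebraType G) setT Y2 ->
  P.-integrable setT (EFin \o Y1) -> P.-integrable setT (EFin \o Y2) ->
  (forall A, G A -> \int[P]_(x in A) (Y1 x)%:E = \int[P]_(x in A) (Y2 x)%:E)%E ->
  {ae P, forall x, Y1 x = Y2 x}.
Proof.
move=> m1 m2 i1 i2 h.
have [ma pa] := half0 _ HG _ _ m1 m2 i1 i2 h.
have [mb pb] := half0 _ HG _ _ m2 m1 i2 i1 (fun A GA => esym (h A GA)).
exists ([set x | Y2 x < Y1 x] `|` [set x | Y1 x < Y2 x]); split.
- exact: measurableU.
- apply/eqP; rewrite eq_le measure_ge0 andbT.
  apply: le_trans (measureU2 _ ma mb) _.
  rewrite -[leRHS](adde0 0%E); apply: leeD; rewrite le_eqVlt; apply/orP; left; apply/eqP.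
    exact: pa.
  exact: pb.
- move=> x /= /eqP; rewrite neq_lt => /orP[]; [right|left] => //.
Qed.


Lemma sum_ce (G : set (set T)) (HG : is_sub_sigma_algebra G) N
  (Xs Ys : 'I_N -> T -> R) (Q : T -> R) :
  (forall j, measurable_fun setT (Xs j)) -> (forall j x, 0 <= Xs j x) ->
  (forall j, cond_exp P G (Xs j) (Ys j)) ->
  cond_exp P G (fun x => \sum_(j < N) Xs j x) Q ->
  {ae P, forall x, Q x = \sum_(j < N) Ys j x}.
Proof.
move=> mX X0 hY [gQ iQ eQ].
have mA A : G A -> measurable A by case: HG => _; apply.
apply: (@uniqY G HG).
- exact: G_meas_g gQ.
- apply: measurable_sum => j; apply: G_meas_g => //; by case: (hY j).
- exact: iQ.
- rewrite (_ : EFin \o _ = fun x => \sum_(j < N) (Ys j x)%:E); last first.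
    by apply/funext => x /=; rewrite sumEFin.
  apply: integrable_sum => // j _; by case: (hY j).
- move=> A GA.
  have e1 : (\int[P]_(x in A) ((\sum_(j < N) Xs j x)%:E) =
      \sum_(j < N) \int[P]_(x in A) (Xs j x)%:E)%E.
    rewrite -ge0_integral_sum //; first by apply: eq_integral => x _; rewrite sumEFin.
    + by apply: mA.
    + move=> j; apply/measurable_EFinP.
      exact: (measurable_funS measurableT (@subsetT _ A) (mX j)).
    + by move=> j x _; rewrite lee_fin.
  have e2 : (\int[P]_(x in A) ((\sum_(j < N) Ys j x)%:E) =
      \sum_(j < N) \int[P]_(x in A) (Ys j x)%:E)%E.
    rewrite -integral_sum //; first by apply: eq_integral => x _; rewrite sumEFin.
    + by apply: mA.
    + move=> j; case: (hY j) => _ iY _; apply: integrableS iY => //; exact: mA.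
  rewrite eQ // e1 e2; apply: eq_bigr => j _; by case: (hY j) => _ _ ->.
Qed.

Lemma pos_ce (G : set (set T)) (HG : is_sub_sigma_algebra G) (X Y : T -> R) :
  measurable_fun setT X -> (forall x, 0 < X x) -> cond_exp P G X Y ->
  {ae P, forall x, 0 < Y x}.
Proof.
move=> mX X0 [gY iY eY].
set A := Y @^-1` `]-oo, 0].
have GA : G A by apply: gY.
have mA : measurable A by case: HG => _; apply.
have PA : P A = 0%E.
  apply: (K0 _ X) => //.
  - exact: (measurable_funS measurableT (@subsetT _ A) mX).
  - rewrite -eY //.
    rewrite (eq_integral (fun x => - ((- Y x)%:E))%E); last first.
      by move=> x _; rewrite EFinN oppeK.
    rewrite integral_ge0N; last first.
      move=> x; rewrite /A /= => /[!in_itv] /= h; by rewrite lee_fin oppr_ge0.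
    rewrite oppe_le0; apply: integral_ge0 => x; rewrite /A /= => /[!in_itv] /= h.
    by rewrite lee_fin oppr_ge0.
exists A; split => // x /= h; rewrite /A /= in_itv /= leNgt; exact/negP.
Qed.

Lemma ae5 (P1 P2 P3 P4 P5 : T -> Prop) :
  {ae P, forall x, P1 x} -> {ae P, forall x, P2 x} -> {ae P, forall x, P3 x} ->
  {ae P, forall x, P4 x} -> {ae P, forall x, P5 x} ->
  {ae P, forall x, [/\ P1 x, P2 x, P3 x, P4 x & P5 x]}.
Proof.
move=> a1 a2 a3 a4 a5.
have b45 : {ae P, forall x, P4 x /\ P5 x} by apply: (filterS2 _ _ a4 a5) => x.
have b345 : {ae P, forall x, P3 x /\ P4 x /\ P5 x} by apply: (filterS2 _ _ a3 b45) => x.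
have b2345 : {ae P, forall x, P2 x /\ P3 x /\ P4 x /\ P5 x}
  by apply: (filterS2 _ _ a2 b345) => x.
by apply: (filterS2 _ _ a1 b2345) => x ? [? [? [? ?]]]; split.
Qed.


Lemma measlt (f g h : T -> R) : measurable_fun setT f -> measurable_fun setT g ->
  measurable_fun setT h -> measurable [set x | f x < g x / h x].
Proof.
move=> mf mg mh.
have mq : measurable_fun setT (fun x => g x / h x - f x).
  apply: measurable_funB => //; apply: measurable_funM => //.
  exact: measurableT_comp (minv R) mh.
have -> : [set x | f x < g x / h x] = (fun x => g x / h x - f x) @^-1` `]0, +oo[.
  by apply/seteqP; split => x /=; rewrite in_itv /= andbT subr_gt0.
by have := mq measurableT _ (measurable_itv `]0, +oo[); rewrite setTI.
Qed.

End H.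
Lemma pw (R : realType) N (i j0 : 'I_N) (p : R) (nm dn pj : 'I_N -> R) (Qn Qd : R) :
  Qn = \sum_(j < N) nm j -> Qd = \sum_(j < N) dn j -> (forall j, 0 < dn j) ->
  (forall j, pj j <= nm j / dn j) -> (forall j, pj j = p) ->
  p <= Qn / Qd /\ (pj j0 < nm j0 / dn j0 -> p < Qn / Qd).
Proof.
move=> -> -> dn0 hle hp.
have key j : p * dn j <= nm j by rewrite -ler_pdivlMr // -(hp j).
have Qd0 : 0 < \sum_(j < N) dn j.
  rewrite (bigD1 i) //=; have := dn0 i.
  have : 0 <= \sum_(j < N | j != i) dn j by apply: sumr_ge0 => j _; exact: ltW.
  lra.
split.
  rewrite ler_pdivlMr // mulr_sumr; apply: ler_sum => j _; exact: key.
move=> hs; have hs' : p * dn j0 < nm j0 by rewrite -ltr_pdivlMr // -(hp j0).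
rewrite ltr_pdivlMr // mulr_sumr (bigD1 j0) //= [X in _ < X](bigD1 j0) //=.
have : \sum_(j < N | j != j0) p * dn j <= \sum_(j < N | j != j0) nm j.
  by apply: ler_sum => j _; exact: key.
lra.
Qed.
(* Rounds are indexed by t : nat (t stands for the paper's round t-1);
   agents by 'I_N (fully connected graph: every neighbourhood is all of 'I_N). *)
Theorem corollary1 (R : realType) (d : measure_display) (T : measurableType d)
  (P : probability T R) (N K : nat)
  (F : nat -> set (set T))
  (y : nat -> 'I_N -> T -> nat) (w : nat -> 'I_N -> T -> R)
  (pv num den : nat -> 'I_N -> T -> R) (Qnum Qden : nat -> T -> R) :
  (forall t, is_sub_sigma_algebra (F t)) ->
  (forall t j k, measurable (y t j @^-1` [set k])) ->
  (forall t j x, (1 <= y t j x <= K)%N) ->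
  (forall t j, measurable_fun setT (w t j)) ->
  (forall t j x, 0 < w t j x <= 1) ->
  (forall t j, cond_exp P (F t) (ind1 (y t j)) (pv t j)) ->
  (forall t j, cond_exp P (F t) (fun x => w t j x * ind1 (y t j) x) (num t j)) ->
  (forall t j, cond_exp P (F t) (w t j) (den t j)) ->
  (forall t, cond_exp P (F t)
      (fun x => \sum_(j < N) w t j x * ind1 (y t j) x) (Qnum t)) ->
  (forall t, cond_exp P (F t) (fun x => \sum_(j < N) w t j x) (Qden t)) ->
  (* positive correlation: rho_{j,t} >= p_{j,t} a.s. *)
  (forall t j, {ae P, forall x, (pv t j x <= num t j x / den t j x)%R}) ->
  (* strict on a set of positive probability for some agent and round *)
  (exists t j, (0 < P [set x | (pv t j x < num t j x / den t j x)%R])%E) ->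
  (* homogeneity *)
  (forall t i j, {ae P, forall x, (pv t j x = pv t i x)%R}) ->
  forall i : 'I_N,
    (forall t, {ae P, forall x, (pv t i x <= Qnum t x / Qden t x)%R}) /\
    (exists t, (0 < P [set x | (pv t i x < Qnum t x / Qden t x)%R])%E).
Proof.
move=> HF my hy mw hw Hpv Hnum Hden HQn HQd Hcorr [t0 [j0 Hstr]] Hhom i.
have mind t j : measurable_fun setT (ind1 (y t j) : T -> R).
  have -> : (ind1 (y t j) : T -> R) = \1_(y t j @^-1` [set 1%N]).
    apply/funext => x; rewrite /ind1 indicE.
    case: (eqVneq (y t j x) 1%N) => h; [by rewrite mem_set | by rewrite memNset //=; exact/eqP].
  exact: measurable_indic.
have mX t j : measurable_fun setT (fun x => w t j x * ind1 (y t j) x).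
  exact: measurable_funM.
have wpos t j x : 0 < w t j x by case/andP: (hw t j x).
have X0 t j x : 0 <= w t j x * ind1 (y t j) x.
  by apply: mulr_ge0; [exact: ltW | exact: ler0n].
have good t : {ae P, forall x, [/\ Qnum t x = \sum_(j < N) num t j x,
   Qden t x = \sum_(j < N) den t j x, (forall j, 0 < den t j x),
   (forall j, pv t j x <= num t j x / den t j x) & (forall j, pv t j x = pv t i x)]}.
  apply: ae5.
  - exact: (@sum_ce _ _ _ P _ (HF t) N _ _ _ (mX t) (X0 t) (Hnum t) (HQn t)).
  - exact: (@sum_ce _ _ _ P _ (HF t) N _ _ _ (mw t) (fun j x => ltW (wpos t j x)) (Hden t) (HQd t)).
  - apply: filter_forall => j.
    exact: (@pos_ce _ _ _ P _ (HF t) _ _ (mw t j) (wpos t j) (Hden t j)).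
  - apply: filter_forall => j; exact: Hcorr.
  - apply: filter_forall => j; exact: Hhom.
split.
  move=> t; apply: filterS (good t) => x [h1 h2 h3 h4 h5].
  by case: (@pw R N i i _ _ _ _ _ _ h1 h2 h3 h4 h5).
exists t0.
have mG Y Z : cond_exp P (F t0) Y Z -> measurable_fun setT Z.
  by case=> gZ _ _; exact: (@G_meas_T _ _ _ (F t0) (HF t0) _ gZ).
have mS : measurable [set x | pv t0 j0 x < num t0 j0 x / den t0 j0 x].
  by apply: measlt; apply: mG; [exact: Hpv | exact: Hnum | exact: Hden].
have mTg : measurable [set x | pv t0 i x < Qnum t0 x / Qden t0 x].
  by apply: measlt; apply: mG; [exact: Hpv | exact: HQn | exact: HQd].
case: (good t0) => N0 [mN0 PN0 sub0].
apply: (lt_le_trans Hstr).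
have sub : [set x | pv t0 j0 x < num t0 j0 x / den t0 j0 x] `<=`
    [set x | pv t0 i x < Qnum t0 x / Qden t0 x] `|` N0.
  move=> x Sx; have [xN|xN] := pselect (N0 x); [by right | left].
  have /contrapT [h1 h2 h3 h4 h5] := fun ng => xN (sub0 x ng).
  by case: (@pw R N i j0 _ _ _ _ _ _ h1 h2 h3 h4 h5) => _; apply.
have mU : measurable ([set x | pv t0 i x < Qnum t0 x / Qden t0 x] `|` N0).
  exact: measurableU.
apply: le_trans (le_measure P (mem_set mS) (mem_set mU) sub) _.
apply: le_trans (measureU2 _ mTg mN0) _.
rewrite -[leRHS](adde0 (P [set x | pv t0 i x < Qnum t0 x / Qden t0 x])).
apply: leeD => //; rewrite le_eqVlt; apply/orP; left; apply/eqP; exact: PN0.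
Qed.
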